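(* Let $\ell\ge1$, $r\ge3$ and $n\ge\max\{3r-5,\,2\ell+3\}$. Then $$\min_{C}|H_n^{(r)}(C)|<\min_{C'}|H_n^{(r)}(C')|,$$ where $C$ ranges over semi-valid tuples of length $2\ell+1$ in $\Omega_n$ and $C'$ over semi-valid tuples of length $2\ell+3$ in $\Omega_n$.
   Context: $\Omega_n=\{v_0,\dots,v_{n-1}\}$ with cyclic order $v_0<\dots<v_{n-1}<v_0$, indices mod $n$. For distinct vertices $u,w$, $(u,w)$ is the set of vertices strictly between $u$ and $w$ moving clockwise from $u$ to $w$, and $[u,w]=(u,w)\cup\{u,w\}$. A tuple $C=(w_1,\dots,w_{2m+1})$ of distinct vertices is semi-valid if $w_1<w_3<\dots<w_{2m+1}<w_2<w_4<\dots<w_{2m}<w_1$ in clockwise cyclic order; indices of the $w$'s mod $2m+1$. $H_n^{(r)}(C)=\{e\in\binom{\Omega_n}{r}: e\cap[w_p,w_{p-1}]\neq\emptyset\ \forall p\in\{1,\dots,2m+1\}\}$. *)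

(* Defs.v *)
From mathcomp Require Import all_boot.
Set Implicit Arguments. Unset Strict Implicit. Unset Printing Implicit Defensive.

(* Vertices of Omega_n are the ordinals 'I_n; v_i is the ordinal i.
   Clockwise order is increasing index mod n. *)

Definition cdist (n : nat) (u v : 'I_n) : nat := (v + n - u) %% n.

Definition carc (n : nat) (u w : 'I_n) : {set 'I_n} :=
  [set v : 'I_n | cdist u v <= cdist u w].

(* A tuple (w_1,...,w_{2m+1}) is a function w : 'I_(2m+1) -> 'I_n,
   w_{i+1} = w i. *)

(* the sequence (w_1, w_3, ..., w_{2m+1}, w_2, w_4, ..., w_{2m}) as indices *)
Definition semi_order (n m : nat) (w : 'I_(m.*2.+1) -> 'I_n) : seq nat :=
  [seq val (w (inord (i.*2))) | i <- iota 0 m.+1] ++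
  [seq val (w (inord (i.*2.+1))) | i <- iota 0 m].

(* a sequence of vertices is in (strict) clockwise cyclic order iff some
   rotation of it is strictly increasing *)
Definition cyclically_increasing (s : seq nat) : Prop :=
  exists j : nat, sorted ltn (rot j s).

Definition semi_valid (n m : nat) (w : 'I_(m.*2.+1) -> 'I_n) : Prop :=
  injective w /\ cyclically_increasing (semi_order w).

Definition prev_idx (m : nat) (p : 'I_(m.*2.+1)) : 'I_(m.*2.+1) :=
  if val p == 0 then ord_max else inord (val p).-1.

Definition Hgraph (n r m : nat) (w : 'I_(m.*2.+1) -> 'I_n) : {set {set 'I_n}} :=
  [set e : {set 'I_n} | (#|e| == r) &&
     [forall p : 'I_(m.*2.+1), e :&: carc (w p) (w (prev_idx p)) != set0]].

(* Main.v *)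
Require Import Defs.
From mathcomp Require Import all_boot.
From mathcomp Require Import zify.
Set Implicit Arguments. Unset Strict Implicit. Unset Printing Implicit Defensive.

Section Cdist.
Variable n : nat.
Implicit Types a b c u v : 'I_n.

Lemma cdistE u v : cdist u v = if u <= v then v - u else v + n - u.
Proof.
rewrite /cdist; have := ltn_ord u; have := ltn_ord v => hv hu.
case: leqP => h.
  have -> : v + n - u = (v - u) + n by lia.
  by rewrite modnDr modn_small //; lia.
by rewrite modn_small //; lia.
Qed.

Lemma cdist_lt u v : cdist u v < n.
Proof. rewrite cdistE; have := ltn_ord u; have := ltn_ord v => hv hu; case: ifP => h; lia. Qed.

Lemma cdist_tri a b c : cdist a c <= cdist a b + cdist b c.
Proof.
rewrite !cdistE; have := ltn_ord a; have := ltn_ord b; have := ltn_ord c => hc hb ha.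
by repeat case: ifP; lia.
Qed.

Lemma cdist_add a b v : cdist a b <= cdist a v -> cdist a v = cdist a b + cdist b v.
Proof.
rewrite !cdistE; have := ltn_ord a; have := ltn_ord b; have := ltn_ord v => hv hb ha.
by repeat case: ifP; lia.
Qed.

Lemma cdist0 a : cdist a a = 0.
Proof. by rewrite cdistE leqnn subnn. Qed.

Lemma cdist_inj a : injective (cdist a).
Proof.
move=> x y; rewrite !cdistE; have := ltn_ord a; have := ltn_ord x; have := ltn_ord y.
move=> hy hx ha h; apply/val_inj => /=; move: h; by repeat case: ifP; lia.
Qed.

Lemma card_carc a b : #|carc a b| = (cdist a b).+1.
Proof.
have hn : 0 < n by case: n a => // -[].
pose f (v : 'I_n) : 'I_n := Ordinal (cdist_lt a v).
have finj : injective f by move=> x y /(congr1 val) /= /cdist_inj.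
have -> : carc a b = f @^-1: [set x : 'I_n | x <= cdist a b].
  by apply/setP => v; rewrite !inE.
rewrite card_preimset //.
have hc : (cdist a b).+1 <= n by apply: cdist_lt.
have -> : [set x : 'I_n | x <= cdist a b] = [set widen_ord hc x | x : 'I_(cdist a b).+1].
  apply/setP => x; rewrite !inE; apply/idP/imsetP.
    move=> hx; have hx' : x < (cdist a b).+1 by [].
    by exists (Ordinal hx'); rewrite // ; apply/val_inj.
  by case=> y _ ->; rewrite /= -ltnS ltn_ord.
by rewrite card_imset ?card_ord //; by move=> x y /(congr1 val) /= /val_inj.
Qed.

Lemma carc_sub a b c : cdist a b <= cdist a c -> carc a b \subset carc a c.
Proof. by move=> h; apply/subsetP => v; rewrite !inE => /leq_trans; apply. Qed.

End Cdist.

Lemma mod_diff a b n : 0 < n -> a <= b -> b < a + n -> ((b %% n) + n - (a %% n)) %% n = b - a.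
Proof.
move=> h1 h2 h3.
have ea := divn_eq a n; have eb := divn_eq b n.
have ra := ltn_pmod a h1; have rb := ltn_pmod b h1.
set qa := a %/ n in ea; set qb := b %/ n in eb.
set xa := a %% n in ea ra *; set xb := b %% n in eb rb *.
have hq : qa <= qb by rewrite /qa /qb leq_div2r.
case: (leqP xa xb) => hx.
  have -> : xb + n - xa = (xb - xa) + n by lia.
  rewrite modnDr modn_small; last by lia.
  have : qb <= qa by nia.
  nia.
rewrite modn_small; last by lia.
have : qb = qa.+1 by nia.
nia.
Qed.

Lemma walk (P : nat -> bool) a j : ~~ P a -> P (a + j) -> exists y, ~~ P y && P y.+1.
Proof.
elim: j a => [|j IH] a; first by rewrite addn0 => /negPf ->.
move=> hna; case: (boolP (P a.+1)) => h.
  by exists a; rewrite hna h.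
by rewrite -addSnnS; apply: IH.
Qed.

Lemma sum_shift1 k (g : nat -> nat) : (forall x, g (x + k.+1) = g x) ->
  \sum_(t < k.+1) g t.+1 = \sum_(t < k.+1) g t.
Proof.
move=> hg; rewrite big_ord_recr big_ord_recl /= addnC.
have -> : g k.+1 = g 0 by rewrite -(hg 0).
by congr (_ + _); apply: eq_bigr.
Qed.

Section Config.
Variables (n m r : nat) (A : nat -> nat).
Hypotheses (hm : 0 < m) (hn : 0 < n) (hr : 0 < r)
  (HA : forall x, A x < A x.+1) (HP : forall x, A (x + m.*2.+1) = A x + n).
Local Notation k := m.*2.+1.

Lemma Alt x y : x < y -> A x < A y.
Proof. exact: (homo_ltn ltn_trans HA). Qed.
Lemma Ale x y : x <= y -> A x <= A y.
Proof. exact: (homo_leq leqnn leq_trans (fun i => ltnW (HA i))). Qed.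
Lemma Aper x s : A (x + s * k) = A x + s * n.
Proof. elim: s x => [|s IH] x; first by rewrite !mul0n !addn0.
by rewrite mulSn addnA IH HP; lia. Qed.
Lemma Agap x i : A x + i <= A (x + i).
Proof. elim: i => [|i IH]; first by rewrite !addn0.
by rewrite !addnS; have := HA (x + i); lia. Qed.
Lemma Awin x i : i < k -> A (x + i) < A x + n.
Proof. by move=> h; rewrite -HP; apply: Alt; lia. Qed.

Definition U x : 'I_n := Ordinal (ltn_pmod (A x) hn).

Lemma cdistU x i : i < k -> cdist (U x) (U (x + i)) = A (x + i) - A x.
Proof.
move=> hi; rewrite /cdist /=; apply: mod_diff => //.
  by apply: Ale; lia.
by apply: Awin.
Qed.

Lemma U_per x s : U (x + s * k) = U x.
Proof. by apply/val_inj => /=; rewrite Aper addnC modnMDl. Qed.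

Lemma U_mod x : U (x %% k) = U x.
Proof. by rewrite -(U_per (x %% k) (x %/ k)) addnC -divn_eq. Qed.

Definition B x := carc (U x) (U (x + m)).

Lemma B_per x s : B (x + s * k) = B x.
Proof. by rewrite /B U_per addnAC U_per. Qed.

Lemma cover v : exists t, v \in B t.
Proof.
pose c := cdist (U 0) v.
have hc : c < n by apply: cdist_lt.
have [y /andP [h1 h2]] : exists y, ~~ (c < A y - A 0) && (c < A y.+1 - A 0).
  apply: (@walk (fun y => c < A y - A 0) 0 k); first by rewrite subnn.
  by rewrite add0n -[k]add0n HP; lia.
rewrite -leqNgt in h1.
have hy : y < k.
  rewrite ltnNge; apply/negP => hk.
  have := Ale hk; rewrite -[k]add0n HP; lia.
exists y; rewrite inE.
have e0 := cdistU 0 hy; rewrite add0n in e0.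
have ec : cdist (U 0) v = cdist (U 0) (U y) + cdist (U y) v.
  by apply: cdist_add; rewrite e0.
have e1 : cdist (U y) (U (y + m)) = A (y + m) - A y by apply: cdistU; lia.
rewrite e1.
have := Ale (_ : y.+1 <= y + m); have := HA y; rewrite -/c in ec; lia.
Qed.

Lemma arc_in x i : i < m -> carc (U (x + i)) (U (x + i).+1) \subset B x.
Proof.
move=> hi; apply/subsetP => v; rewrite !inE => hv.
have e1 : cdist (U x) (U (x + i)) = A (x + i) - A x by apply: cdistU; lia.
have e2 : cdist (U (x + i)) (U ((x + i) + 1)) = A (x + i + 1) - A (x + i) by apply: cdistU; lia.
have e3 : cdist (U x) (U (x + m)) = A (x + m) - A x by apply: cdistU; lia.
rewrite addn1 in e2; rewrite e2 in hv; rewrite e3.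
have t := cdist_tri (U x) (U (x + i)) v.
have := Ale (_ : x <= x + i); have := Ale (_ : (x + i).+1 <= x + m); have := HA (x + i).
lia.
Qed.

Lemma B_split x : B x \subset carc (U x) (U x.+1) :|: B x.+1.
Proof.
apply/subsetP => v; rewrite !inE => hv.
have e1 : cdist (U x) (U (x + 1)) = A (x + 1) - A x by apply: cdistU; lia.
have e3 : cdist (U x) (U (x + m)) = A (x + m) - A x by apply: cdistU; lia.
have e4 : cdist (U x.+1) (U (x.+1 + m)) = A (x.+1 + m) - A x.+1 by apply: cdistU; lia.
rewrite addn1 in e1; rewrite e1 e4; rewrite e3 in hv.
case: (leqP (cdist (U x) v) (A x.+1 - A x)) => h; first by apply/orP; left.
have ea := @cdist_add _ (U x) (U x.+1) v; rewrite e1 in ea.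
have := ea (ltnW h); have := Ale (_ : x + m <= x.+1 + m); have := HA x.
rewrite orbC; move=> *; apply/orP; left; lia.
Qed.

Lemma B_union x : B x :|: B x.+1 = carc (U x) (U (x + m.+1)).
Proof.
have e1 : cdist (U x) (U (x + 1)) = A (x + 1) - A x by apply: cdistU; lia.
have e3 : cdist (U x) (U (x + m)) = A (x + m) - A x by apply: cdistU; lia.
have e4 : cdist (U x.+1) (U (x.+1 + m)) = A (x.+1 + m) - A x.+1 by apply: cdistU; lia.
have e5 : cdist (U x) (U (x + m.+1)) = A (x + m.+1) - A x by apply: cdistU; lia.
rewrite addn1 in e1.
have hx1 := HA x; have hm1 := Ale (_ : x + m <= x + m.+1); have hm2 := Ale (_ : x.+1 <= x + m).
have em : x.+1 + m = x + m.+1 by lia.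
have em2 : A (x.+1 + m) = A (x + m.+1) by rewrite em.
apply/setP => v; rewrite !inE /B e3 e4 e5.
have t := cdist_tri (U x) (U x.+1) v.
apply/idP/idP.
  case/orP => h; lia.
move=> h; case: (leqP (cdist (U x) v) (A x.+1 - A x)) => h2.
  apply/orP; left; lia.
have ea := @cdist_add _ (U x) (U x.+1) v; rewrite e1 in ea.
have := ea (ltnW h2); move=> *; apply/orP; right; lia.
Qed.

Lemma card_compl_carc (a b : 'I_n) : #|~: carc a b| = n - (cdist a b).+1.
Proof. by rewrite cardsCs setCK card_ord card_carc. Qed.


Lemma B_mod x : B (x %% k) = B x.
Proof. by rewrite -(B_per (x %% k) (x %/ k)) addnC -divn_eq. Qed.

Lemma B_modS x : B (x %% k).+1 = B x.+1.
Proof. by rewrite -B_mod -addn1 modnDml addn1 B_mod. Qed.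

Definition Hs := [set e : {set 'I_n} | (#|e| == r) && [forall x : 'I_k, e :&: B x != set0]].
Definition Us := [set e : {set 'I_n} | (#|e| == r) && [exists x : 'I_k, e :&: B x == set0]].

Lemma HU : #|Hs| + #|Us| = 'C(n, r).
Proof.
set D := [set e : {set 'I_n} | #|e| == r].
have -> : Us = D :\: Hs.
  apply/setP => e; rewrite !inE; case: (#|e| == r) => //=.
  rewrite negb_forall andbT; apply/existsP/existsP => -[x hx]; exists x; by rewrite ?negbK in hx *.
have hs : Hs \subset D by apply/subsetP => e; rewrite !inE => /andP[->].
rewrite cardsDS // subnKC ?subset_leq_card //.
by rewrite /D card_draws card_ord.
Qed.

Definition S t := [set e : {set 'I_n} | [&& #|e| == r, e :&: B t.+1 == set0 & e :&: B t != set0]].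

Lemma hit_sub (e X Y : {set 'I_n}) : e :&: X != set0 -> X \subset Y -> e :&: Y == set0 -> False.
Proof.
case/set0Pn => v; rewrite inE => /andP [hve hvX] hXY /eqP hY.
have : v \in e :&: Y by rewrite inE hve (subsetP hXY).
by rewrite hY inE.
Qed.

Lemma S_hit t e : e \in S t -> e :&: carc (U t) (U t.+1) != set0.
Proof.
rewrite inE => /and3P [_ h1 h2].
case/set0Pn: h2 => v; rewrite inE => /andP [hve hvB].
have := subsetP (B_split t) v hvB; rewrite inE => /orP [hc|hb].
  by apply/set0Pn; exists v; rewrite inE hve hc.
move/eqP: h1 => h1; have : v \in e :&: B t.+1 by rewrite inE hve hb.
by rewrite h1 inE.
Qed.

Lemma S_disj (t t' : 'I_k) e : e \in S t -> e \in S t' -> t' < t -> False.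
Proof.
move=> ht ht' hlt.
have ht0 := ht; have ht'0 := ht'.
move: ht; rewrite inE => /and3P [_ hB1 _].
move: ht'; rewrite inE => /and3P [_ hB1' _].
have hk := ltn_ord t.
case: (leqP (t - t') m) => hd.
  have ha := arc_in (t'.+1) (_ : t - t' - 1 < m).
  have eq : t'.+1 + (t - t' - 1) = t by lia.
  rewrite eq in ha.
  by apply: (hit_sub (S_hit ht0) (ha _) hB1'); lia.
have ha := arc_in (t.+1) (_ : m.*2 - (t - t') < m).
have eq : t.+1 + (m.*2 - (t - t')) = t' + 1 * k by lia.
rewrite eq in ha.
have eq2 : (t' + 1 * k).+1 = t'.+1 + 1 * k by lia.
rewrite eq2 !U_per in ha.
by apply: (hit_sub (S_hit ht'0) (ha _) hB1); lia.
Qed.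

Lemma S_sub t : S t \subset Us.
Proof.
apply/subsetP => e; rewrite !inE => /and3P [h1 h2 _]; rewrite h1 /=.
apply/existsP; exists (Ordinal (ltn_pmod t.+1 (ltn0Sn (m.*2)))); by rewrite /= B_mod.
Qed.

Lemma Us_cover e : e \in Us -> exists t : 'I_k, e \in S t.
Proof.
rewrite inE => /andP [he /existsP [x0 hx0]].
have : 0 < #|e| by rewrite (eqP he).
rewrite card_gt0 => /set0Pn [v hv].
have [t0 ht0] := cover v.
have [y /andP [hy1 hy2]] : exists y, ~~ (e :&: B y == set0) && (e :&: B y.+1 == set0).
  apply: (@walk (fun y => e :&: B y == set0) t0 (x0 + t0 * k - t0)).
    by apply/set0Pn; exists v; rewrite inE hv ht0.
  have -> : t0 + (x0 + t0 * k - t0) = x0 + t0 * k by nia.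
  by rewrite B_per.
exists (Ordinal (ltn_pmod y (ltn0Sn (m.*2)))).
by rewrite inE /= he B_mod B_modS hy1 hy2.
Qed.

Lemma card_Us : #|Us| = \sum_(t < k) #|S t|.
Proof.
have e1 : forall t, #|S t| = \sum_(e : {set 'I_n}) (e \in S t).
  by move=> t; rewrite -sum1_card big_mkcond; apply: eq_bigr => e _; case: (e \in S t).
rewrite (eq_bigr (fun t : 'I_k => \sum_(e : {set 'I_n}) (e \in S t))); last by move=> t _; exact: e1.
rewrite exchange_big /=.
rewrite -sum1_card big_mkcond; apply: eq_bigr => e _.
case: (boolP (e \in Us)) => he.
  have [t0 ht0] := Us_cover he.
  rewrite (bigD1 t0) //= ht0 big1 // => t htt0.
  apply/eqP; rewrite eqb0; apply/negP => ht; case/negP: htt0; apply/eqP.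
  case: (ltngtP t t0) => h.
  - by case: (S_disj ht0 ht h).
  - by case: (S_disj ht ht0 h).
  - by apply/val_inj.
rewrite big1 // => t _; apply/eqP; rewrite eqb0; apply/negP => ht; case/negP: he.
exact: (subsetP (S_sub t)).
Qed.


Lemma sub_compl (e X : {set 'I_n}) : (e \subset ~: X) = (e :&: X == set0).
Proof. by rewrite -disjoints_subset setI_eq0. Qed.

Definition aa x := 'C(n - (A (x + m) - A x).+1, r).
Definition bb x := 'C(n - (A (x + m.+1) - A x).+1, r).

Lemma card_S t : #|S t| = aa t.+1 - bb t /\ bb t <= aa t.+1.
Proof.
set D1 := [set e : {set 'I_n} | e \subset ~: B t.+1 & #|e| == r].
set D2 := [set e : {set 'I_n} | e \subset ~: (B t :|: B t.+1) & #|e| == r].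
have hS : S t = D1 :\: D2.
  apply/setP => e; rewrite !inE !sub_compl setIUr setU_eq0.
  by case: (#|e| == r); case: (e :&: B t == set0); case: (e :&: B t.+1 == set0).
have h21 : D2 \subset D1.
  apply/subsetP => e; rewrite !inE !sub_compl setIUr setU_eq0 => /andP [/andP [_ ->] ->] //.
have c1 : #|D1| = aa t.+1.
  rewrite /D1 cards_draws /B card_compl_carc cdistU //; lia.
have c2 : #|D2| = bb t.
  rewrite /D2 cards_draws B_union card_compl_carc cdistU //; lia.
rewrite hS cardsDS // c1 c2; split => //.
by rewrite -c1 -c2 subset_leq_card.
Qed.

Lemma count_main : #|Hs| + \sum_(t < k) aa t = 'C(n, r) + \sum_(t < k) bb t.
Proof.
have ha : forall x, aa (x + k) = aa x.
  by move=> x; rewrite /aa addnAC !HP; congr ('C(_, _)); lia.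
rewrite -(sum_shift1 ha) -HU card_Us -addnA -big_split /=.
congr (_ + _); apply: eq_bigr => t _.
by case: (card_S t) => -> h; rewrite subnK.
Qed.

End Config.

Lemma prev_val m (p : 'I_(m.*2.+1)) : val (prev_idx p) = (p + m.*2) %% m.*2.+1.
Proof.
rewrite /prev_idx; case: eqP => [->|/eqP h].
  by rewrite /= add0n modn_small.
have hp := ltn_ord p; have h0 : 0 < nat_of_ord p by rewrite lt0n.
rewrite /= inordK; last by lia.
have -> : p + m.*2 = p.-1 + m.*2.+1 by lia.
by rewrite modnDr modn_small; lia.
Qed.

Lemma size_semi n m (w : 'I_(m.*2.+1) -> 'I_n) : size (semi_order w) = m.*2.+1.
Proof. by rewrite /semi_order size_cat !size_map !size_iota; lia. Qed.

Lemma nth_semi n m (w : 'I_(m.*2.+1) -> 'I_n) i : i < m.*2.+1 ->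
  nth 0 (semi_order w) i = w (inord (i.*2 %% m.*2.+1)).
Proof.
move=> hi; rewrite /semi_order nth_cat size_map size_iota.
case: ltnP => h.
  rewrite (nth_map 0) ?size_iota // nth_iota // add0n modn_small //; lia.
rewrite (nth_map 0) ?size_iota; last by lia.
rewrite nth_iota; last by lia.
congr (val (w (inord _))).
have -> : i.*2 = (i - m.+1).*2.+1 + m.*2.+1 by lia.
rewrite modnDr modn_small; lia.
Qed.

Lemma nth_rot_gen (s : seq nat) j t : j < size s -> t < size s ->
  nth 0 (rot j s) t = nth 0 s ((t + j) %% size s).
Proof.
move=> hj ht; rewrite /rot nth_cat size_drop.
case: ltnP => h.
  by rewrite nth_drop modn_small; [congr nth; lia | lia].
rewrite nth_take; last by lia.
have -> : t + j = (t - (size s - j)) + size s by lia.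
by rewrite modnDr modn_small; lia.
Qed.

Section Extract.
Variables (n m : nat) (w : 'I_(m.*2.+1) -> 'I_n) (j : nat).
Local Notation k := m.*2.+1.
Hypotheses (hj : j < k) (hs : sorted ltn (rot j (semi_order w))) (hn : 0 < n).

Definition ax t := nth 0 (rot j (semi_order w)) t.

Lemma ax_val t : t < k -> ax t = w (inord ((t + j).*2 %% k)).
Proof.
move=> ht; rewrite /ax nth_rot_gen ?size_semi // nth_semi ?ltn_pmod //.
by congr (nat_of_ord (w (inord _))); rewrite -!muln2 modnMml.
Qed.

Lemma ax_lt t : t < k -> ax t < n.
Proof. by move=> ht; rewrite ax_val. Qed.

Lemma ax_mono s t : s < t -> t < k -> ax s < ax t.
Proof.
move=> hst htk; have := sorted_ltn_nth ltn_trans 0 hs; apply => //; rewrite ?inE ?size_rot ?size_semi //.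
exact: ltn_trans hst htk.
Qed.

Definition Ax x := ax (x %% k) + n * (x %/ k).

Lemma Ax_form q i : i < k -> Ax (q * k + i) = ax i + n * q.
Proof.
move=> hi; rewrite /Ax modnMDl modn_small // divnMDl // divn_small //; lia.
Qed.

Lemma Ax_S x : Ax x < Ax x.+1.
Proof.
rewrite (divn_eq x k); set q := x %/ k; set i := x %% k.
have hi : i < k by apply: ltn_pmod.
rewrite Ax_form //.
case: (ltnP i.+1 k) => h.
  by rewrite -[(q * k + i).+1]addnS Ax_form // ltn_add2r ax_mono.
have -> : (q * k + i).+1 = q.+1 * k + 0 by rewrite mulSn; lia.
rewrite Ax_form // mulnS.
have := ax_lt hi; lia.
Qed.

Lemma Ax_P x : Ax (x + k) = Ax x + n.
Proof.
rewrite (divn_eq x k) -addnA [_ + k]addnC addnA -mulSnr !Ax_form ?ltn_pmod //.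
by rewrite mulnS; lia.
Qed.

Lemma U_val x : val (U Ax hn x) = w (inord ((x + j).*2 %% k)).
Proof.
rewrite /= /Ax [ax _ + _]addnC [n * _]mulnC modnMDl modn_small ?ax_lt ?ltn_pmod // ax_val ?ltn_pmod //.
by congr (nat_of_ord (w (inord _))); rewrite -!muln2 -modnMml modnDml modnMml.
Qed.

Lemma U_w x (p : 'I_k) : (x + j).*2 %% k = p -> U Ax hn x = w p.
Proof. by move=> h; apply/val_inj; rewrite U_val h inord_val. Qed.

Lemma Hgraph_eq r (hm : 0 < m) (hr : 0 < r) : Hgraph r w = Hs m r Ax hn.
Proof.
apply/setP => e; rewrite !inE; congr andb; apply/forallP/forallP.
  move=> H x; have := H (inord ((x + j).*2 %% k)).
  have hpv : nat_of_ord (inord ((x + j).*2 %% k) : 'I_k) = (x + j).*2 %% k by rewrite inordK ?ltn_pmod.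
  rewrite /B -(@U_w x) //; rewrite -(@U_w (x + m)) //.
  rewrite prev_val hpv modnDml; congr (_ %% _); lia.
move=> H p.
set x0 := m.+1 * p + k.-1 * j.
have := H (Ordinal (ltn_pmod x0 (ltn0Sn m.*2))); rewrite /= (@B_mod n m r Ax hm hn hr Ax_P).
have e1 : (x0 + j).*2 = (p + j.*2) * k + p by rewrite /x0; lia.
rewrite /B (@U_w x0 p); last by rewrite e1 modnMDl modn_small.
rewrite (@U_w (x0 + m) (prev_idx p)) // prev_val.
have -> : (x0 + m + j).*2 = (p + j.*2) * k + (p + m.*2) by rewrite /x0; lia.
by rewrite modnMDl.
Qed.

End Extract.

Lemma step_arith (ra ra1 ca cb na nb Pc Pn Sn Sc : nat) :
  Sn <= Sc -> ra1 <= ra -> Pc + ra1 * Sn <= Pn + ra1 * Sc ->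
  ra * ca + (Pc + ra * cb) + ra * (na + (Sn + nb)) <=
  ra * na + (Pn + ra * nb) + ra * (ca + (Sc + cb)).
Proof.
move=> h1 h2 h3.
have h4 : ra1 * (Sc - Sn) <= ra * (Sc - Sn) by apply: leq_mul.
rewrite !mulnBr in h4.
have l1 : ra * Sn <= ra * Sc by apply: leq_mul.
have l2 : ra1 * Sn <= ra1 * Sc by apply: leq_mul.
rewrite !mulnDr. lia.
Qed.

Lemma layer (N q : nat) (rho Nf cf : nat -> nat) :
  (forall a, q <= a -> a < N.-1 - a -> rho (N.-1 - a) = rho a) ->
  (forall a, q <= a -> a.+1 < N - a.+1 -> rho a.+1 <= rho a) ->
  (forall a, q < a -> \sum_(a <= y < N - a) Nf y <= \sum_(a <= y < N - a) cf y) ->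
  \sum_(q <= y < N - q) Nf y = \sum_(q <= y < N - q) cf y ->
  \sum_(q <= y < N - q) rho y * cf y <= \sum_(q <= y < N - q) rho y * Nf y.
Proof.
move=> hsym hmono hN htot.
suff H : forall d a, q <= a -> N - a - a <= d ->
  \sum_(a <= y < N - a) rho y * cf y + rho a * \sum_(a <= y < N - a) Nf y <=
  \sum_(a <= y < N - a) rho y * Nf y + rho a * \sum_(a <= y < N - a) cf y.
  by have := H (N - q - q) q (leqnn q) (leqnn _); rewrite htot leq_add2r.
clear htot.
elim=> [|d IH] a hqa hd.
  have h0 : N - a <= a by lia.
  by rewrite !(big_geq h0).
case: (ltngtP (N - a) a.+1) => hc.
- have h0 : N - a <= a by rewrite -ltnS.
  by rewrite !(big_geq h0).
- have e : N - a = (N - a.+1).+1 by lia.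
  have h1 : a < (N - a.+1).+1 by lia.
  have h2 : a.+1 <= N - a.+1 by lia.
  have ea : N - a.+1 = N.-1 - a by lia.
  have h3 : a < N.-1 - a by lia.
  have h4 : N - a.+1 - a.+1 <= d by lia.
  have h5 : q < a.+1 by lia.
  have hS := hN a.+1 h5.
  have IH2 := IH a.+1 (leqW hqa) h4.
  rewrite e !(big_ltn h1) !(big_nat_recr _ _ _ h2) /=.
  rewrite ea (hsym a hqa h3) -ea.
  set Pc := \sum_(a.+1 <= y < N - a.+1) rho y * cf y in IH2 *.
  set Pn := \sum_(a.+1 <= y < N - a.+1) rho y * Nf y in IH2 *.
  set Sn := \sum_(a.+1 <= y < N - a.+1) Nf y in IH2 hS *.
  set Sc := \sum_(a.+1 <= y < N - a.+1) cf y in IH2 hS *.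
  case: (ltnP a.+1 (N - a.+1)) => hne.
    exact: step_arith hS (hmono a hqa hne) IH2.
  have -> : Pc = 0 by rewrite /Pc big_geq.
  have -> : Pn = 0 by rewrite /Pn big_geq.
  have -> : Sc = 0 by rewrite /Sc big_geq.
  have -> : Sn = 0 by rewrite /Sn big_geq.
  by apply: (@step_arith _ 0).
- by rewrite hc !big_nat1 addnC.
Qed.

Lemma sum_shift k (g : nat -> nat) s : (forall x, g (x + k.+1) = g x) ->
  \sum_(t < k.+1) g (t + s) = \sum_(t < k.+1) g t.
Proof.
move=> hg; elim: s => [|s IH]; first by apply: eq_bigr => t _; rewrite addn0.
rewrite -IH -(@sum_shift1 k (fun x => g (x + s))); last by move=> x; rewrite addnAC hg.
by apply: eq_bigr => t _; rewrite addnS addSn.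
Qed.

Lemma count_lt a b x : a <= b -> \sum_(a <= y < b) (y < x) = minn x b - a.
Proof.
move=> hab; elim: b hab => [|b IH] hab.
  by rewrite big_geq //; lia.
case: (ltngtP a b.+1) => h.
- rewrite big_nat_recr //= IH //.
  have := leq_addr a 0; case: (ltnP b x) => hb; lia.
- lia.
- by rewrite h big_geq //; lia.
Qed.

Lemma split3 q (h : nat -> nat) :
  \sum_(t < q.*2.+1) h t = h 0 + \sum_(i < q) (h i.+1 + h (i.+1 + q)).
Proof.
rewrite big_ord_recl /=; congr (_ + _).
rewrite -addnn big_split_ord big_split /=.
congr (_ + _); apply: eq_bigr => i _ //=.
by rewrite /= addSn addnC.
Qed.

Section Analysis.
Variables (N q r : nat) (A : nat -> nat).
Hypotheses (hq : 0 < q) (hN : 0 < N) (hr : 1 < r)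
  (HA : forall x, A x < A x.+1) (HP : forall x, A (x + q.*2.+1) = A x + N).
Local Notation k := q.*2.+1.

Definition X t := A (t + q) - A t.

Lemma AleX x y : x <= y -> A x <= A y.
Proof. exact: (homo_leq leqnn leq_trans (fun i => ltnW (HA i))). Qed.
Lemma AgapX x i : A x + i <= A (x + i).
Proof. elim: i => [|i IH]; first by rewrite !addn0.
by rewrite !addnS; have := HA (x + i); lia. Qed.

Lemma X_ge t : q <= X t.
Proof. rewrite /X; have := AgapX t q; lia. Qed.

Lemma X_le t : X t + q.+1 <= N.
Proof.
rewrite /X; have := AgapX (t + q) q.+1; have := HP t; have := AleX (_ : t <= t + q).
have -> : t + q + q.+1 = t + k by lia.
lia.
Qed.

Lemma X_pair t : X t + X (t + q) < N.
Proof.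
rewrite /X; have := HP t; have := AgapX (t + q + q) 1; have := AleX (_ : t <= t + q).
have := AleX (_ : t + q <= t + q + q).
have -> : t + q + q + 1 = t + k by lia.
lia.
Qed.

Lemma X_per t : X (t + k) = X t.
Proof. by rewrite /X addnAC !HP; lia. Qed.

Lemma tele a b : \sum_(i < b) (A (a + i).+1 - A (a + i)) = A (a + b) - A a.
Proof.
elim: b => [|b IH]; first by rewrite big_ord0 addn0 subnn.
rewrite big_ord_recr /= IH.
have := AleX (_ : a <= a + b); have := HA (a + b); rewrite addnS; lia.
Qed.

Lemma X_sum : \sum_(t < k) X t = q * N.
Proof.
have e1 : forall t : 'I_k, X t = \sum_(i < q) (A (t + i).+1 - A (t + i)).
  by move=> t; rewrite tele.
rewrite (eq_bigr _ (fun t _ => e1 t)) exchange_big /=.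
have e2 : forall i : 'I_q, \sum_(t < k) (A (t + i).+1 - A (t + i)) = N.
  move=> i.
  rewrite (@sum_shift _ (fun x => A x.+1 - A x)); last first.
    by move=> x; rewrite -addSn !HP; lia.
  have ht := tele 0 k.
  have hN' : A (0 + k) - A 0 = N by rewrite HP; lia.
  rewrite -hN' -ht.
  by apply: eq_bigr => t _; rewrite add0n.
rewrite (eq_bigr _ (fun i _ => e2 i)) sum_nat_const card_ord.
by rewrite mulnC.
Qed.


Lemma N_ge : k <= N.
Proof. have := AgapX 0 k; rewrite HP; lia. Qed.

Definition rho y := 'C(N.-1 - y.+1, r.-1) + 'C(y.-1, r.-1).
Definition Nf y := \sum_(t < k) (y < X t).
Definition cf y := q * (y < N - q.+1).
Definition Rf x := \sum_(q <= y < x) rho y.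

Lemma pair_bound a x y : x + y < N -> minn x (N - a) - a + (minn y (N - a) - a) <= N - a - a.
Proof. lia. Qed.


Lemma Nclaim a : q < a -> \sum_(a <= y < N - a) Nf y <= \sum_(a <= y < N - a) cf y.
Proof.
move=> hqa.
case: (leqP (N - a) a) => hNa.
  by rewrite !big_geq.
have hc : \sum_(a <= y < N - a) cf y = (N - a - a) * q.
  rewrite -sum_nat_const_nat; apply: eq_big_nat => y /andP [h1 h2].
  rewrite /cf; have -> : y < N - q.+1 by lia.
  by rewrite muln1.
rewrite hc /Nf exchange_big /=.
rewrite (eq_bigr (fun t : 'I_k => minn (X t) (N - a) - a)); last first.
  by move=> t _; rewrite count_lt //; apply: ltnW.
case: (boolP [exists t : 'I_k, X t <= a]).
  case/existsP => t0 ht0.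
  pose g x := minn (X x) (N - a) - a.
  have hg : forall x, g (x + k) = g x by move=> x; rewrite /g X_per.
  rewrite -[X in X <= _](@sum_shift _ g t0) // (split3 q (fun t => g (t + t0))).
  have -> : g (0 + t0) = 0 by rewrite /g add0n; lia.
  rewrite add0n mulnC -[q in q * _]card_ord -sum_nat_const.
  apply: leq_sum => i _.
  rewrite /g.
  have := X_pair (i.+1 + t0).
  have -> : i.+1 + q + t0 = i.+1 + t0 + q by lia.
  exact: pair_bound.
rewrite negb_exists => /forallP hall.
have h1 : forall t : 'I_k, minn (X t) (N - a) - a + a <= X t.
  by move=> t; have := hall t; rewrite -ltnNge; lia.
have h2 : \sum_(t < k) (minn (X t) (N - a) - a) + k * a <= q * N.
  rewrite -X_sum -[k in k * a]card_ord -sum_nat_const -big_split /=.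
  by apply: leq_sum => t _; apply: h1.
move: h2; set S := \sum_(t < k) _.
clear; nia.
Qed.


Lemma Ntotal : \sum_(q <= y < N - q) Nf y = \sum_(q <= y < N - q) cf y.
Proof.
have hk := N_ge.
have hc : \sum_(q <= y < N - q) cf y = q * (N - q.+1 - q).
  rewrite /cf -big_distrr /= count_lt; last by lia.
  congr (_ * _); lia.
rewrite hc /Nf exchange_big /=.
rewrite (eq_bigr (fun t : 'I_k => X t - q)); last first.
  move=> t _; rewrite count_lt; last by lia.
  have := X_le t; lia.
have h2 : \sum_(t < k) (X t - q) + k * q = q * N.
  rewrite -X_sum -[k in k * q]card_ord -sum_nat_const -big_split /=.
  by apply: eq_bigr => t _; have := X_ge t; lia.
move: h2; set S := \sum_(t < k) _.
clear -hk; nia.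
Qed.

Lemma rho_sym a : q <= a -> a < N.-1 - a -> rho (N.-1 - a) = rho a.
Proof.
move=> h1 h2; rewrite /rho addnC; congr ('C(_, _) + 'C(_, _)); lia.
Qed.

Lemma rho_mono a : q <= a -> a.+1 < N - a.+1 -> rho a.+1 <= rho a.
Proof.
move=> h1 h2; rewrite /rho.
case: r hr => [|[|r2]] // _ /=.
have e1 : N.-1 - a.+1 = (N.-1 - a.+2).+1 by lia.
have e2 : a = (a.-1).+1 by lia.
have b1 : 'C(N.-1 - a.+1, r2.+1) = 'C(N.-1 - a.+2, r2.+1) + 'C(N.-1 - a.+2, r2) by rewrite e1 binS.
have b2 : 'C(a, r2.+1) = 'C(a.-1, r2.+1) + 'C(a.-1, r2) by rewrite {1}e2 binS.
rewrite b1 b2.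
have : 'C(a.-1, r2) <= 'C(N.-1 - a.+2, r2) by apply: leq_bin2l; lia.
lia.
Qed.

Lemma sum_rho_lt x : q <= x -> x <= N - q ->
  \sum_(q <= y < N - q) rho y * (y < x) = Rf x.
Proof.
move=> h1 h2; rewrite (big_cat_nat h1 h2) /= [X in _ + X]big1_seq; last first.
  move=> y /andP [_]; rewrite mem_index_iota => /andP [hy _].
  by rewrite ltnNge hy muln0.
rewrite addn0 /Rf; apply: eq_big_nat => y /andP [_ hy].
by rewrite hy muln1.
Qed.

Lemma layer_app : q * Rf (N - q.+1) <= \sum_(t < k) Rf (X t).
Proof.
have hk := N_ge.
have := layer rho_sym rho_mono Nclaim Ntotal.
have -> : \sum_(q <= y < N - q) rho y * cf y = q * Rf (N - q.+1).
  rewrite -sum_rho_lt; try lia.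
  rewrite big_distrr /=; apply: eq_bigr => y _; rewrite /cf; lia.
have -> : \sum_(q <= y < N - q) rho y * Nf y = \sum_(t < k) Rf (X t).
  rewrite /Nf.
  under eq_bigr => y _ do rewrite big_distrr.
  rewrite exchange_big /=; apply: eq_bigr => t _.
  rewrite sum_rho_lt //; [apply: X_ge | have := X_le t; lia].
done.
Qed.

Lemma tele_rho x : q <= x -> x <= N - q.+1 ->
  'C(N.-1 - x, r) + Rf x + 'C(q.-1, r) = 'C(N.-1 - q, r) + 'C(x.-1, r).
Proof.
move=> h1; rewrite -(subnK h1); elim: (x - q) => [|i IH] h2.
  by rewrite add0n /Rf big_geq //; lia.
have h2' : i + q <= N - q.+1 by lia.
have IH' := IH h2'.
rewrite /Rf addSn big_nat_recr /=; last by lia.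
rewrite -/(Rf (i + q)).
have hk := N_ge.
rewrite /rho.
case: r hr IH' => [|r1] // _ IH'.
have e3 : N.-1 - (i + q) = (N.-1 - (i + q).+1).+1 by lia.
have e4 : i + q = (i + q).-1.+1 by lia.
have b1 : 'C(N.-1 - (i + q), r1.+1) = 'C(N.-1 - (i + q).+1, r1.+1) + 'C(N.-1 - (i + q).+1, r1).
  by rewrite e3 binS.
have b2 : 'C(i + q, r1.+1) = 'C((i + q).-1, r1.+1) + 'C((i + q).-1, r1).
  by rewrite {1}e4 binS.
rewrite /=; rewrite b1 in IH'; rewrite b2.
move: IH'; set RR := Rf (i + q).
clear; lia.
Qed.


Lemma Hs_lower :
  'C(N, r) + q.+1 * 'C(q.-1, r) + q * 'C(N - q.+2, r) <=
  #|Hs q r A hN| + q.+1 * 'C(N.-1 - q, r) + q * 'C(q, r).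
Proof.
have hk := N_ge.
have cm := count_main hq hN (ltnW hr) HA HP.
have ea : \sum_(t < k) aa N q r A t = \sum_(t < k) 'C(N.-1 - X t, r).
  by apply: eq_bigr => t _; rewrite /aa -/(X t); congr 'C(_, _); lia.
have eb : \sum_(t < k) bb N q r A t = \sum_(t < k) 'C((X t).-1, r).
  rewrite -(@sum_shift _ (fun t => 'C((X t).-1, r)) q.+1); last by move=> x; rewrite X_per.
  apply: eq_bigr => t _; rewrite /bb /X; congr 'C(_, _).
  have := HP t; have := AleX (_ : t <= t + q.+1); have := AleX (_ : t + q.+1 <= t + q.+1 + q).
  have -> : t + q.+1 + q = t + k by lia.
  have := AgapX (t + q.+1) q; have -> : t + q.+1 + q = t + k by lia.
  lia.
rewrite ea eb in cm.
have et : \sum_(t < k) ('C(N.-1 - X t, r) + Rf (X t) + 'C(q.-1, r)) =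
          \sum_(t < k) ('C(N.-1 - q, r) + 'C((X t).-1, r)).
  apply: eq_bigr => t _; apply: tele_rho; first by apply: X_ge.
  have := X_le t; lia.
rewrite !big_split /= !sum_nat_const card_ord in et.
have hl := layer_app.
have hq2 : q <= N - q.+1 by lia.
have t2 := @tele_rho (N - q.+1) hq2 (leqnn _).
have e5 : N.-1 - (N - q.+1) = q by lia.
have e6 : (N - q.+1).-1 = N - q.+2 by lia.
rewrite e5 e6 in t2.
have t3 := congr1 (muln q) t2; rewrite !mulnDr in t3.
move: cm et hl t3.
set S1 := \sum_(t < k) 'C(N.-1 - X t, r).
set S2 := \sum_(t < k) 'C((X t).-1, r).
set S3 := \sum_(t < k) Rf (X t).
set R0 := Rf (N - q.+1).
set H0 := #|Hs q r A hN|.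
clear; lia.
Qed.

End Analysis.

Section Concrete.
Variables (n l : nat).
Hypotheses (hl : 0 < l) (hn : l.*2.+1 <= n).
Local Notation k := l.*2.+1.

Lemma half_le (p : 'I_k) : p./2 + odd p * l.+1 < n.
Proof.
have := odd_double_half p; have := ltn_ord p.
case: (odd p) => /= h1 h2; lia.
Qed.

Definition wc (p : 'I_k) : 'I_n := Ordinal (half_le p).

Lemma semi_wc : semi_order wc = iota 0 k.
Proof.
rewrite /semi_order.
have -> : [seq val (wc (inord (i.*2))) | i <- iota 0 l.+1] = iota 0 l.+1.
  rewrite -[RHS]map_id; apply/eq_in_map => i; rewrite mem_iota => /andP [_ hi].
  rewrite /= inordK; last by lia.
  by rewrite odd_double doubleK /= addn0.
have -> : [seq val (wc (inord (i.*2.+1))) | i <- iota 0 l] = iota l.+1 l.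
  rewrite -[l.+1 in RHS]addn0 iotaDl; apply/eq_in_map => i; rewrite mem_iota => /andP [_ hi].
  rewrite /= inordK; last by lia.
  have := odd_double_half i.*2.+1; rewrite /= odd_double /= => h.
  lia.
by rewrite -iotaD; congr iota; lia.
Qed.

Lemma wc_inj : injective wc.
Proof.
move=> p p' /(congr1 val) /=.
have := odd_double_half p; have := odd_double_half p'; have := ltn_ord p; have := ltn_ord p'.
move=> h1 h2 h3 h4 h; apply/val_inj => /=.
move: h h3 h4; case: (odd p); case: (odd p') => /= h h3 h4; lia.
Qed.

Lemma semi_valid_wc : semi_valid wc.
Proof.
split; first exact: wc_inj.
by exists 0; rewrite rot0 semi_wc iota_ltn_sorted.
Qed.

End Concrete.

Section ConcreteCount.
Variables (n l r : nat).
Hypotheses (hl : 0 < l) (hn : l.*2.+1 <= n) (hr : 0 < r).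
Local Notation k := l.*2.+1.
Local Notation w := (wc hl hn).

Let hn0 : 0 < n. Proof. by apply: leq_ltn_trans hn. Qed.
Let hj : 0 < k. Proof. by []. Qed.
Let hs : sorted ltn (rot 0 (semi_order w)).
Proof. by rewrite rot0 semi_wc iota_ltn_sorted. Qed.

Lemma Axc i : i < k + k -> Ax w 0 i = if i < k then i else i - k + n.
Proof.
move=> hi.
have ax_id : forall t, t < k -> ax w 0 t = t.
  by move=> t ht; rewrite /ax rot0 semi_wc nth_iota.
case: ifP => h.
  have := @Ax_form n l w 0 hj hs hn0 0 i h; rewrite mul0n add0n => ->.
  by rewrite ax_id // muln0 addn0.
have h' : i - k < k by lia.
have := @Ax_form n l w 0 hj hs hn0 1 (i - k) h'.
have -> : 1 * k + (i - k) = i by lia.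
by move=> ->; rewrite ax_id // muln1.
Qed.

Lemma Hwc_count :
  #|Hgraph r w| + l.+1 * 'C(n - l.+1, r) + l * 'C(l, r) =
  'C(n, r) + l * 'C(n - l.+2, r) + l.+1 * 'C(l.-1, r).
Proof.
rewrite (Hgraph_eq hj hs hn0 hl hr).
have cm := count_main hl hn0 hr (Ax_S hj hs hn0) (Ax_P hj hs hn0).
have ea : \sum_(t < k) aa n l r (Ax w 0) t = l.+1 * 'C(n - l.+1, r) + l * 'C(l, r).
  rewrite -(big_mkord xpredT (aa n l r (Ax w 0))).
  rewrite (big_cat_nat (_ : 0 <= l.+1) (_ : l.+1 <= k)) //=; last by lia.
  rewrite (eq_big_nat _ _ (F2 := fun _ => 'C(n - l.+1, r))); last first.
    move=> t /andP [_ ht]; rewrite /aa !Axc; try lia.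
    have -> : t < k by lia.
    have -> : t + l < k by lia.
    congr 'C(_, _); lia.
  rewrite [X in _ + X](eq_big_nat _ _ (F2 := fun _ => 'C(l, r))); last first.
    move=> t /andP [h1 ht]; rewrite /aa !Axc; try lia.
    have -> : t < k by lia.
    have -> : (t + l < k) = false by apply/negbTE; rewrite -leqNgt; lia.
    congr 'C(_, _); lia.
  rewrite !sum_nat_const_nat; congr (_ * _ + _ * _); lia.
have eb : \sum_(t < k) bb n l r (Ax w 0) t = l * 'C(n - l.+2, r) + l.+1 * 'C(l.-1, r).
  rewrite -(big_mkord xpredT (bb n l r (Ax w 0))).
  rewrite (big_cat_nat (_ : 0 <= l) (_ : l <= k)) //=; last by lia.
  rewrite (eq_big_nat _ _ (F2 := fun _ => 'C(n - l.+2, r))); last first.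
    move=> t /andP [_ ht]; rewrite /bb !Axc; try lia.
    have -> : t < k by lia.
    have -> : t + l.+1 < k by lia.
    congr 'C(_, _); lia.
  rewrite [X in _ + X](eq_big_nat _ _ (F2 := fun _ => 'C(l.-1, r))); last first.
    move=> t /andP [h1 ht]; rewrite /bb !Axc; try lia.
    have -> : t < k by lia.
    have -> : (t + l.+1 < k) = false by apply/negbTE; rewrite -leqNgt; lia.
    congr 'C(_, _); lia.
  rewrite !sum_nat_const_nat; congr (_ * _ + _ * _); lia.
rewrite ea eb in cm; move: cm; set H0 := #|_|; clear; lia.
Qed.

End ConcreteCount.

Lemma bin_strict a b c : 0 < c -> a < b -> c <= b -> 'C(a, c) < 'C(b, c).
Proof.
move=> hc hab hcb.
case: (ltnP a c) => h.
  by rewrite bin_small // bin_gt0.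
case: c hc hcb h => [|c] // _ hcb h.
have h1 : 'C(a.+1, c.+1) <= 'C(b, c.+1) by apply: leq_bin2l.
rewrite binS in h1.
have h2 : 0 < 'C(a, c) by rewrite bin_gt0; apply: ltnW.
lia.
Qed.

Unset Implicit Arguments.

Theorem proposition3p10 (l r n : nat) :
  1 <= l -> 3 <= r -> maxn (3 * r - 5) (l.*2 + 3) <= n ->
  exists C : 'I_(l.*2.+1) -> 'I_n,
    semi_valid C /\
    forall C' : 'I_(l.+1.*2.+1) -> 'I_n,
      semi_valid C' -> #|Hgraph r C| < #|Hgraph r C'|.
Proof.
move=> hl hr hn.
have hn1 : l.*2.+1 <= n by lia.
exists (wc hl hn1); split; first exact: semi_valid_wc.
move=> C' [_ [j hj]].
pose j' := if j < l.+1.*2.+1 then j else 0.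
have hj' : j' < l.+1.*2.+1 by rewrite /j'; case: ifP.
have hs : sorted ltn (rot j' (semi_order C')).
  rewrite /j'; case: ifP => // h.
  rewrite rot0; rewrite rot_oversize in hj => //.
  by rewrite size_semi leqNgt h.
have hn0 : 0 < n by lia.
have hr0 : 0 < r by lia.
have hr1 : 1 < r by lia.
rewrite (Hgraph_eq hj' hs hn0 (ltn0Sn l) hr0).
have low := Hs_lower (ltn0Sn l) hn0 hr1 (Ax_S hj' hs hn0) (Ax_P hj' hs hn0).
have cc := Hwc_count hl hn1 hr0.
move: low cc.
set H2 := #|Hs _ _ _ _|.
set H1 := #|Hgraph _ _|.
set M := n - l.+3.
have e1 : n - l.+1 = M.+2 by rewrite /M; lia.
have e2 : n - l.+2 = M.+1 by rewrite /M; lia.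
have e3 : n.-1 - l.+1 = M.+1 by rewrite /M; lia.
rewrite e1 e2 e3 /=.
have hM1 : l <= M by rewrite /M; lia.
have hM2 : r - 2 <= M by rewrite /M; lia.
have [r0 er] : exists r0, r = r0.+3 by exists (r - 3); lia.
rewrite er; rewrite er in hM2.
rewrite subSS subSS subn0 in hM2.
have p1 : 'C(M.+2, r0.+3) = 'C(M.+1, r0.+3) + 'C(M.+1, r0.+2) by rewrite binS.
have p2 : 'C(M.+1, r0.+3) = 'C(M, r0.+3) + 'C(M, r0.+2) by rewrite binS.
have p3 : 'C(M.+1, r0.+2) = 'C(M, r0.+2) + 'C(M, r0.+1) by rewrite binS.
have el : l = l.-1.+1 by lia.
have p4 : 'C(l.+1, r0.+3) = 'C(l, r0.+3) + 'C(l, r0.+2) by rewrite binS.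
have p5 : 'C(l, r0.+3) = 'C(l.-1, r0.+3) + 'C(l.-1, r0.+2) by rewrite {1}el binS.
have p6 : 'C(l, r0.+2) = 'C(l.-1, r0.+2) + 'C(l.-1, r0.+1) by rewrite {1}el binS.
have st : 'C(l.-1, r0.+1) < 'C(M, r0.+1) by apply: bin_strict; lia.
have st2 : l.+1 * 'C(l.-1, r0.+1) < l.+1 * 'C(M, r0.+1) by rewrite ltn_pmul2l.
rewrite p1 p2 p3 p4 p5 p6 !mulnDr.
clear -st2; lia.
Qed.
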